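(* Let $f\colon V_0\to\mathbb{R}$ be continuous such that $\Gamma_f$ is a ruled surface. Let $R_1,R_2$ be distinct rulings of $\Gamma_f$ intersecting at a point $p\in\mathbb{H}$, with $m(R_1)<m(R_2)$. Then for every $m\in[m(R_1),m(R_2)]$, the horizontal line $L_{p,m}$ is a ruling of $\Gamma_f$.
   Context: $\mathbb{H}$ is $\mathbb{R}^3$ with product $(x,y,z)\cdot(x',y',z')=(x+x',y+y',z+z'+\frac{xy'-yx'}{2})$; $X=(1,0,0)$, $Y=(0,1,0)$, $v^t=tv$. A horizontal line is $\{p\cdot tv\}$ with $v=(a,b,0)\ne0$, slope $b/a$; $L_{p,m}=\{p\cdot(X+mY)^t:t\in\mathbb{R}\}$ is the horizontal line of slope $m$ through $p$. A ruled surface is a union of horizontal line segments (rulings) with endpoints in its boundary (for entire $\Gamma_f$ the rulings are horizontal lines). $V_0=\{(x,0,z)\}$, $\Gamma_f=\{u\cdot Y^{f(u)}:u\in V_0\}$. $m(R)$ denotes the slope of a ruling $R$. *)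

(* Defs.v *)
From HB Require Import structures.
From mathcomp Require Import all_boot all_order all_algebra.
From mathcomp Require Import all_classical all_reals all_analysis.
Set Implicit Arguments. Unset Strict Implicit. Unset Printing Implicit Defensive.
Import Order.TTheory GRing.Theory Num.Theory.
Import numFieldNormedType.Exports.
Local Open Scope ring_scope.
Local Open Scope classical_set_scope.

Definition heis (R : realType) := (R * R * R)%type.

Definition hx {R : realType} (p : heis R) : R := p.1.1.
Definition hy {R : realType} (p : heis R) : R := p.1.2.
Definition hz {R : realType} (p : heis R) : R := p.2.

Definition hmul {R : realType} (p q : heis R) : heis R :=
  (hx p + hx q, hy p + hy q,
   hz p + hz q + (hx p * hy q - hy p * hx q) / 2).

Definition hdil {R : realType} (t : R) (v : heis R) : heis R :=
  (t * hx v, t * hy v, t * hz v).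

Definition hline {R : realType} (p : heis R) (a b : R) : set (heis R) :=
  [set q | exists t : R, q = hmul p (hdil t (a, b, 0))].

Definition is_horizontal_line {R : realType} (L : set (heis R)) : Prop :=
  exists (p : heis R) (a b : R), (a != 0 \/ b != 0) /\ L = hline p a b.

Definition Lpm {R : realType} (p : heis R) (m : R) : set (heis R) :=
  hline p 1 m.

Definition has_slope {R : realType} (L : set (heis R)) (m : R) : Prop :=
  exists (p : heis R) (a b : R), a != 0 /\ b / a = m /\ L = hline p a b.

(* V_0 = {(x,0,z)} is parametrized by (x,z) in R*R.
   Gamma_f = {u . Y^{f(u)} : u in V_0}. *)
Definition Gamma {R : realType} (f : R * R -> R) : set (heis R) :=
  [set q | exists u : R * R, q = hmul (u.1, 0, u.2) (hdil (f u) (0, 1, 0))].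

(* For an entire graph the rulings are horizontal lines: a ruling of Gamma_f
   is a horizontal line contained in Gamma_f. *)
Definition is_ruling {R : realType} (f : R * R -> R) (L : set (heis R)) : Prop :=
  is_horizontal_line L /\ L `<=` Gamma f.

Definition ruled_graph {R : realType} (f : R * R -> R) : Prop :=
  forall q, Gamma f q -> exists L, is_ruling f L /\ L q.

(* Main.v *)
Require Import Defs.
From HB Require Import structures.
From mathcomp Require Import all_boot all_order all_algebra.
From mathcomp Require Import all_classical all_reals all_analysis.
From mathcomp Require Import ring lra.
Import Order.TTheory GRing.Theory Num.Theory.
Import numFieldNormedType.Exports.
Local Open Scope ring_scope.
Local Open Scope classical_set_scope.

Lemma nosign (R : realType) (A B C a b : R) :
  (forall t, A * t ^+ 2 + B * t + C = 0 -> 2 * A * t + B = 0) ->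
  A * a ^+ 2 + B * a + C < 0 -> A * b ^+ 2 + B * b + C <= 0.
Proof.
move=> H ha; rewrite leNgt; apply/negP => hb.
have [A0|A0] := eqVneq A 0.
  subst A.
  have B0 : B != 0 by apply/eqP => B0; subst B; lra.
  have h1 : 0 * (- C / B) ^+ 2 + B * (- C / B) + C = 0 by field.
  have := H _ h1; rewrite mulr0 mul0r add0r => B0'.
  by move: B0; rewrite B0' eqxx.
set D := B ^+ 2 - 4 * A * C.
have key : forall t, 4 * A * (A * t ^+ 2 + B * t + C) = (2 * A * t + B) ^+ 2 - D.
  by move=> t; rewrite /D; ring.
have Dp : 0 < D.
  have := key a; have := key b.
  have : 0 <= (2 * A * a + B) ^+ 2 by apply: sqr_ge0.
  have : 0 <= (2 * A * b + B) ^+ 2 by apply: sqr_ge0.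
  have [Ap|An] := ltrP 0 A.
    have : 4 * A * (A * a ^+ 2 + B * a + C) < 0 by nra.
    nra.
  have An' : A < 0 by rewrite lt_neqAle A0.
  have : 4 * A * (A * b ^+ 2 + B * b + C) < 0 by nra.
  nra.
set r := (- B + Num.sqrt D) / (2 * A).
have e : 2 * A * r + B = Num.sqrt D.
  rewrite /r; field; lra.
have sD : Num.sqrt D ^+ 2 = D by rewrite sqr_sqrtr // ltW.
have hr : A * r ^+ 2 + B * r + C = 0.
  have : 4 * A * (A * r ^+ 2 + B * r + C) = 0 by rewrite key e sD subrr.
  by move/eqP; rewrite !mulf_eq0 (negbTE A0) orbF => /orP[/eqP h|/eqP //]; lra.
have := H _ hr; rewrite e => /eqP; rewrite sqrtr_eq0 leNgt Dp //.
Qed.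

Lemma core (R : realType) (Y0 Zp s m m1 m2 m' Y : R) : s != 0 -> m1 < m -> m < m2 ->
 (forall k, (k = m1 \/ k = m2) -> forall t,
    (Zp - Y0 * s - m * s ^+ 2 / 2) - Y * t - m' * t ^+ 2 / 2
      = Zp - Y0 * (s + t) - k * (s + t) ^+ 2 / 2 -> Y + m' * t = Y0 + k * (s + t)) ->
 Y = Y0 + m * s.
Proof.
move=> s0 h1 h2 H.
have s2 : 0 < s ^+ 2 by rewrite lt_neqAle sqr_ge0 andbT eq_sym sqrf_eq0.
have P : forall k, (k = m1 \/ k = m2) -> forall t,
   (k - m') / 2 * t ^+ 2 + (Y0 + k * s - Y) * t + (k - m) * s ^+ 2 / 2 = 0 ->
   2 * ((k - m') / 2) * t + (Y0 + k * s - Y) = 0.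
  move=> k hk t ht.
  have := H k hk t.
  have -> : (Zp - Y0 * s - m * s ^+ 2 / 2) - Y * t - m' * t ^+ 2 / 2
      = Zp - Y0 * (s + t) - k * (s + t) ^+ 2 / 2 +
       ((k - m') / 2 * t ^+ 2 + (Y0 + k * s - Y) * t + (k - m) * s ^+ 2 / 2).
    by field.
  rewrite ht addr0 => /(_ erefl) e.
  have -> : 2 * ((k - m') / 2) * t + (Y0 + k * s - Y) = Y0 + k * (s + t) - (Y + m' * t).
    by field.
  by rewrite e subrr.
have c1 := @nosign R _ _ _ 0 (-s) (P m1 (or_introl erefl)).
have c2 := @nosign R (- ((m2 - m') / 2)) (- (Y0 + m2 * s - Y))
   (- ((m2 - m) * s ^+ 2 / 2)) 0 (-s).
have c2' : (- ((m2 - m') / 2)) * (- s) ^+ 2 + - (Y0 + m2 * s - Y) * (- s) +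
     - ((m2 - m) * s ^+ 2 / 2) <= 0.
  apply: c2.
    move=> t ht.
    have := P m2 (or_intror erefl) t.
    have -> : (m2 - m') / 2 * t ^+ 2 + (Y0 + m2 * s - Y) * t + (m2 - m) * s ^+ 2 / 2
      = - (- ((m2 - m') / 2) * t ^+ 2 + - (Y0 + m2 * s - Y) * t + - ((m2 - m) * s ^+ 2 / 2)) by field.
    rewrite ht oppr0 => /(_ erefl) e.
    have -> : 2 * - ((m2 - m') / 2) * t + - (Y0 + m2 * s - Y)
      = - (2 * ((m2 - m') / 2) * t + (Y0 + m2 * s - Y)) by field.
    by rewrite e oppr0.
  rewrite expr0n /=; nra.
have c1' : (m1 - m') / 2 * (- s) ^+ 2 + (Y0 + m1 * s - Y) * (- s) + (m1 - m) * s ^+ 2 / 2 <= 0.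
  apply: c1; rewrite expr0n /=; nra.
have c0 : (m1 - m') / 2 * (- s) ^+ 2 + (Y0 + m1 * s - Y) * (- s) + (m1 - m) * s ^+ 2 / 2 = 0.
  apply/eqP; rewrite eq_le c1' /=.
  have -> : (m1 - m') / 2 * (- s) ^+ 2 + (Y0 + m1 * s - Y) * (- s) + (m1 - m) * s ^+ 2 / 2
     = - ((- ((m2 - m') / 2)) * (- s) ^+ 2 + - (Y0 + m2 * s - Y) * (- s) +
     - ((m2 - m) * s ^+ 2 / 2)) by field.
  by rewrite oppr_ge0.
have e := P m1 (or_introl erefl) _ c0.
have eY : Y = Y0 + m' * s by lra.
have em : (m' - m) * s ^+ 2 = 0.
  move: c0; rewrite eY.
  have -> : (m1 - m') / 2 * (- s) ^+ 2 + (Y0 + m1 * s - (Y0 + m' * s)) * (- s) + (m1 - m) * s ^+ 2 / 2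
    = (m' - m) * s ^+ 2 / 2 by field.
  move=> h; lra.
move/eqP: em; rewrite mulf_eq0 (gt_eqF s2) orbF subr_eq0 => /eqP em'.
by rewrite eY em'.
Qed.

Ltac fld := field; try done.

Lemma GammaP (R : realType) (f : R * R -> R) (q : heis R) :
  Gamma f q <-> hy q = f (hx q, hz q - hx q * hy q / 2).
Proof.
split.
  move=> [[u1 u2] ->]; rewrite /hmul /hdil /hx /hy /hz /=.
  set F := f (u1, u2).
  transitivity F; first by ring.
  by rewrite {1}/F; congr f; congr pair; fld.
move=> h; exists (hx q, hz q - hx q * hy q / 2).
case: q h => [[x y] z]; rewrite /hmul /hdil /hx /hy /hz /= => <-.
congr (_, _, _); fld.
Qed.

Lemma Lpm_pt (R : realType) (r : heis R) k t :
  let q := hmul r (hdil t (1, k, 0)) in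
  [/\ hx q = hx r + t, hy q = hy r + k * t &
      hz q - hx q * hy q / 2 = (hz r - hx r * hy r / 2) - hy r * t - k * t ^+ 2 / 2].
Proof.
rewrite /hmul /hdil /hx /hy /hz /=; split; fld.
Qed.

Lemma hline_Lpm (R : realType) (p' r : heis R) a b : a != 0 ->
  hline p' a b r -> Lpm r (b / a) `<=` hline p' a b.
Proof.
move=> a0 [t0 ->] q [t ->]; exists (t0 + t / a).
case: p' => [[x y] z]; rewrite /hmul /hdil /hx /hy /hz /=.
congr (_, _, _); fld.
Qed.

Lemma no_vertical (R : realType) (f : R * R -> R) (p' : heis R) b :
  hline p' 0 b `<=` Gamma f -> b = 0.
Proof.
move=> H.
have h0 := H _ (ex_intro _ 0 erefl).
have h1 := H _ (ex_intro _ 1 erefl).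
move: h0 h1; rewrite !GammaP; case: p' H => [[x y] z] _.
rewrite /hmul /hdil /hx /hy /hz /=.
move=> e0 e1.
have : f (x + 0 * 0, z + 0 * 0 + (x * (0 * b) - y * (0 * 0)) / 2 -
        (x + 0 * 0) * (y + 0 * b) / 2) =
       f (x + 1 * 0, z + 1 * 0 + (x * (1 * b) - y * (1 * 0)) / 2 -
        (x + 1 * 0) * (y + 1 * b) / 2).
  by congr f; congr pair; fld.
rewrite -e0 -e1 => e; lra.
Qed.

Arguments hline_Lpm {R p' r a b}.
Arguments Lpm_pt {R}.
Arguments no_vertical {R f p' b}.
Arguments GammaP {R f q}.

Theorem lemma4p3 (R : realType) (f : R * R -> R) (R1 R2 : set (heis R))
    (m1 m2 : R) (p : heis R) :
  continuous f -> ruled_graph f ->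
  is_ruling f R1 -> is_ruling f R2 -> R1 <> R2 ->
  R1 p -> R2 p ->
  has_slope R1 m1 -> has_slope R2 m2 -> m1 < m2 ->
  forall m : R, m1 <= m <= m2 -> is_ruling f (Lpm p m).
Proof.
move=> _ ruled [_ G1] [_ G2] _ p1 p2 [p1' [a1 [b1 [a10 [e1 eR1]]]]]
  [p2' [a2 [b2 [a20 [e2 eR2]]]]] m12 m /andP[hm1 hm2].
subst R1 R2.
have L1 : Lpm p m1 `<=` Gamma f by rewrite -e1; move=> q /(hline_Lpm a10 p1) /G1.
have L2 : Lpm p m2 `<=` Gamma f by rewrite -e2; move=> q /(hline_Lpm a20 p2) /G2.
split.
  by exists p, 1, m; split => //; left; exact: oner_neq0.
have [->|n1] := eqVneq m m1; first exact: L1.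
have [->|n2] := eqVneq m m2; first exact: L2.
have lt1 : m1 < m by rewrite lt_neqAle eq_sym n1.
have lt2 : m < m2 by rewrite lt_neqAle n2.
move=> _ [s ->].
have [->|s0] := eqVneq s 0.
  have -> : hmul p (hdil 0 (1, m, 0)) = p.
    by case: p {L1 L2 p1 p2} => [[x y] z]; rewrite /hmul /hdil /hx /hy /hz /=; congr (_,_,_); fld.
  exact: G1 _ p1.
have [qx qy qz] := Lpm_pt p m s.
set q := hmul p (hdil s (1, m, 0)) in qx qy qz *.
set X := hx q. set Z := hz q - hx q * hy q / 2.
pose qs : heis R := (X, f (X, Z), Z + X * f (X, Z) / 2).
have Gqs : Gamma f qs.
  by apply/GammaP; rewrite /qs /hx /hy /hz /=; congr f; congr pair; fld.
have [L [[[p' [a [b [ab eL]]]] GL] Lqs]] := ruled qs Gqs.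
subst L.
have a0 : a != 0.
  apply/negP => /eqP a0; subst a.
  have := no_vertical GL => b0; subst b.
  by case: ab => /eqP.
have Lq := hline_Lpm a0 Lqs.
set m' := b / a in Lq.
have key : f (X, Z) = hy p + m * s.
  apply: (@core R (hy p) (hz p - hx p * hy p / 2) s m m1 m2 m') => // k hk t ht.
  have Gk : Gamma f (hmul p (hdil (s + t) (1, k, 0))).
    by case: hk => ->; [apply: L1 | apply: L2]; exists (s + t).
  have GQ : Gamma f (hmul qs (hdil t (1, m', 0))) by apply/GL/Lq; exists t.
  have [kx ky kz] := Lpm_pt p k (s + t).
  have [Qx Qy Qz] := Lpm_pt qs m' t.
  move: Gk GQ; rewrite !GammaP kz Qz kx ky Qx Qy => -> ->.
  have eX : hx qs = X by [].
  have eY : hy qs = f (X, Z) by [].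
  have eZ : hz qs - hx qs * hy qs / 2 = Z by rewrite /qs /hx /hy /hz /=; fld.
  rewrite eZ eY eX; congr f; congr pair; first by rewrite /X qx addrA.
  by move: ht; rewrite -qz -/Z.
apply/GammaP; rewrite -/X -/Z.
by rewrite key qy.
Qed.
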